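(* Let $(\Omega,\mathcal A)$ be a Borel space, $(\Omega,X_\bullet)$ a Borel field of metric spaces, and $U_\bullet$ a subfield such that $U_\omega$ is open in $X_\omega$ for every $\omega$. If there is a fundamental family $\mathcal D$ of $\mathcal L(\Omega,X_\bullet)$ such that $\{\omega\in\Omega\mid x_\omega\in U_\omega\}\in\mathcal A$ for every $x_\bullet\in\mathcal D$, then $U_\bullet$ is a Borel subfield.
   Context: Borel field of metric spaces: $(X_\omega,d_\omega)_{\omega\in\Omega}$ metric spaces; a section is $x_\bullet=(x_\omega)$, $x_\omega\in X_\omega$. A Borel structure is a set $\mathcal L(\Omega,X_\bullet)$ of sections such that (a) $\omega\mapsto d_\omega(x_\omega,y_\omega)$ is Borel for all $x_\bullet,y_\bullet\in\mathcal L$; (b) any section $y_\bullet$ with $\omega\mapsto d_\omega(x_\omega,y_\omega)$ Borel for all $x_\bullet\in\mathcal L$ lies in $\mathcal L$; (c) there is a countable $\mathcal D=\{x^n_\bullet\}\subseteq\mathcal L$ (fundamental family) with $\{x^n_\omega\}_n$ dense in $X_\omega$ for all $\omega$. For Borel $\Omega'$, $\mathcal L(\Omega',X_\bullet)$ = restrictions to $\Omega'$ of Borel sections. A subfield is $A_\bullet=(A_\omega)$ with $A_\omega\subseteq X_\omega$ (possibly empty); it is Borel if $\Omega'=\{\omega:A_\omega\ne\emptyset\}\in\mathcal A$ and there are countably many $y^n_\bullet\in\mathcal L(\Omega',X_\bullet)$ with $y^n_\omega\in A_\omega$ and $A_\omega\subseteq\overline{\{y^n_\omega\}_n}$ for all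 $\omega\in\Omega'$. *)

(* Defs.v *)
From Stdlib Require Import Reals.
Open Scope R_scope.

Definition sigma_algebra {T : Type} (S : (T -> Prop) -> Prop) : Prop :=
  S (fun _ => True) /\
  (forall B, S B -> S (fun x => ~ B x)) /\
  (forall Bs : nat -> T -> Prop, (forall n, S (Bs n)) ->
      S (fun x => exists n, Bs n x)).

Definition R_open (O : R -> Prop) : Prop :=
  forall x, O x -> exists eps, eps > 0 /\ forall y, Rabs (y - x) < eps -> O y.

Definition R_Borel (B : R -> Prop) : Prop :=
  forall S : (R -> Prop) -> Prop, sigma_algebra S ->
    (forall O, R_open O -> S O) -> S B.

Definition Borel_fun {Omega : Type} (A : (Omega -> Prop) -> Prop)
  (f : Omega -> R) : Prop :=
  forall B, R_Borel B -> A (fun w => B (f w)).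

Definition is_metric {X : Type} (d : X -> X -> R) : Prop :=
  (forall p q, 0 <= d p q) /\
  (forall p q, d p q = 0 <-> p = q) /\
  (forall p q, d p q = d q p) /\
  (forall p q r, d p r <= d p q + d q r).

Definition section {Omega : Type} (X : Omega -> Type) : Type := forall w, X w.

(* countable family of sections (possibly finite or empty) *)
Definition countable_family {T : Type} (D : T -> Prop) : Prop :=
  exists e : nat -> option T, forall s, D s <-> exists n, e n = Some s.

Definition in_closure_of {X : Type} (d : X -> X -> R) {I : Type}
  (Ind : I -> Prop) (f : I -> X) (p : X) : Prop :=
  forall eps, eps > 0 -> exists i, Ind i /\ d p (f i) < eps.

Definition fundamental_family {Omega : Type} {X : Omega -> Type}
  (d : forall w, X w -> X w -> R) (L : section X -> Prop)
  (D : section X -> Prop) : Prop :=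
  countable_family D /\ (forall x, D x -> L x) /\
  (forall w (p : X w), in_closure_of (d w) D (fun x => x w) p).

Definition Borel_structure {Omega : Type} (A : (Omega -> Prop) -> Prop)
  {X : Omega -> Type} (d : forall w, X w -> X w -> R)
  (L : section X -> Prop) : Prop :=
  (forall x y, L x -> L y -> Borel_fun A (fun w => d w (x w) (y w))) /\
  (forall y, (forall x, L x -> Borel_fun A (fun w => d w (x w) (y w))) -> L y) /\
  (exists D, fundamental_family d L D).

Definition Borel_field {Omega : Type} (A : (Omega -> Prop) -> Prop)
  (X : Omega -> Type) (d : forall w, X w -> X w -> R)
  (L : section X -> Prop) : Prop :=
  sigma_algebra A /\ (forall w, is_metric (d w)) /\ Borel_structure A d L.

Definition subfield {Omega : Type} (X : Omega -> Type) : Type :=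
  forall w, X w -> Prop.

Definition metric_open {X : Type} (d : X -> X -> R) (U : X -> Prop) : Prop :=
  forall p, U p -> exists eps, eps > 0 /\ forall q, d p q < eps -> U q.

(* Borel subfield: Omega' = {w | U_w nonempty} in A, and countably many
   y^n in L(Omega', X) (= restrictions to Omega' of Borel sections) with
   y^n_w in U_w and U_w in the closure of {y^n_w} for all w in Omega'. *)
Definition Borel_subfield {Omega : Type} (A : (Omega -> Prop) -> Prop)
  {X : Omega -> Type} (d : forall w, X w -> X w -> R)
  (L : section X -> Prop) (U : subfield X) : Prop :=
  let Omega' := fun w => exists p, U w p in
  A Omega' /\
  exists Y : section X -> Prop,
    countable_family Y /\ (forall y, Y y -> L y) /\
    (forall w, Omega' w ->
       (forall y, Y y -> U w (y w)) /\
       (forall p, U w p -> in_closure_of (d w) Y (fun y => y w) p)).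

(* Main.v *)
Require Import Defs.
From Stdlib Require Import Reals.
From Stdlib Require Import Classical ClassicalEpsilon FunctionalExtensionality PropExtensionality Lia Lra.

Section Aux.
Context {T : Type} (A : (T -> Prop) -> Prop) (HA : sigma_algebra A).

Lemma A_ext (S S' : T -> Prop) : A S -> (forall w, S w <-> S' w) -> A S'.
Proof.
  intros H E. replace S' with S; auto.
  apply functional_extensionality; intro w; apply propositional_extensionality; auto.
Qed.

Lemma A_compl S : A S -> A (fun w => ~ S w).
Proof. destruct HA as [_ [H _]]; auto. Qed.

Lemma A_empty : A (fun _ => False).
Proof.
  destruct HA as [H1 [H2 _]]. apply (A_ext _ _ (H2 _ H1)). intuition.
Qed.

Lemma A_cunion (Bs : nat -> T -> Prop) : (forall n, A (Bs n)) -> A (fun w => exists n, Bs n w).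
Proof. destruct HA as [_ [_ H]]; auto. Qed.

Lemma A_union S S' : A S -> A S' -> A (fun w => S w \/ S' w).
Proof.
  intros H1 H2.
  apply (A_ext _ _ (A_cunion (fun n w => match n with O => S w | _ => S' w end)
     (fun n => match n with O => H1 | _ => H2 end))).
  intro w; split.
  - intros [[|n] Hn]; auto.
  - intros [H|H]; [exists O | exists 1%nat]; auto.
Qed.

Lemma A_inter S S' : A S -> A S' -> A (fun w => S w /\ S' w).
Proof.
  intros H1 H2.
  apply (A_ext _ _ (A_compl _ (A_union _ _ (A_compl _ H1) (A_compl _ H2)))).
  intro w; tauto.
Qed.
End Aux.

Lemma least_ex (P : nat -> Prop) : (exists k, P k) -> exists k, P k /\ forall j, P j -> (k <= j)%nat.
Proof.
  intros [n Hn]. revert Hn. induction n as [n IH] using (well_founded_induction Wf_nat.lt_wf).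
  intros Hn. destruct (classic (exists j, (j < n)%nat /\ P j)) as [[j [Hj Pj]]|Hno].
  - eauto.
  - exists n; split; auto. intros j Pj. destruct (Nat.lt_ge_cases j n); auto.
    exfalso; eauto.
Qed.

Theorem mainTheorem4 (Omega : Type) (A : (Omega -> Prop) -> Prop)
  (X : Omega -> Type) (d : forall w, X w -> X w -> R)
  (L : section X -> Prop) (U : subfield X) :
  Borel_field A X d L ->
  (forall w, metric_open (d w) (U w)) ->
  (exists D, fundamental_family d L D /\
     forall x, D x -> A (fun w => U w (x w))) ->
  Borel_subfield A d L U.
Proof.
  intros [HA [Hmet [HLa [HLb _]]]] Hopen [D [[[e He] [HDL Hdense]] HDU]].
  assert (Hkey : forall w p, U w p -> forall eps, eps > 0 -> exists x, D x /\ U w (x w) /\ d w p (x w) < eps).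
  { intros w p Hp eps Heps. destruct (Hopen w p Hp) as [e' [He' Hb]].
    destruct (Hdense w p (Rmin eps e')) as [x [Dx Hx]].
    { apply Rmin_pos; lra. }
    exists x; split; [auto|split].
    - apply Hb. eapply Rlt_le_trans; [exact Hx| apply Rmin_r].
    - eapply Rlt_le_trans; [exact Hx| apply Rmin_l]. }
  destruct (classic (exists s0, D s0)) as [[s0 Ds0]|HnD].
  2:{
    assert (Hemp : forall w p, ~ U w p).
    { intros w p Hp. destruct (Hkey w p Hp 1) as [x [Dx _]]; [lra|]. eauto. }
    simpl. split.
    - apply (A_ext A (fun _ => False)); [apply A_empty; auto|].
      intro w; split; [tauto|]. intros [p Hp]; exact (Hemp w p Hp).
    - exists (fun _ => False). split; [exists (fun _ => None); intro s; split; [tauto|intros [n Hn]; discriminate]|].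
      split; [tauto|]. intros w [p Hp]; exfalso; exact (Hemp w p Hp). }
  set (f := fun n => match e n with Some s => s | None => s0 end).
  assert (HfD : forall n, D (f n)).
  { intro n; unfold f. destruct (e n) eqn:E; auto. apply He; eauto. }
  assert (HDf : forall x, D x -> exists n, f n = x).
  { intros x Dx. apply He in Dx. destruct Dx as [n Hn]. exists n; unfold f; rewrite Hn; auto. }
  set (An := fun n w => U w (f n w)).
  assert (HAn : forall n, A (An n)) by (intro n; apply HDU; auto).
  assert (HOm : forall w, (exists p, U w p) <-> exists n, An n w).
  { intro w; split.
    - intros [p Hp]. destruct (Hkey w p Hp 1) as [x [Dx [Ux _]]]; [lra|].
      destruct (HDf x Dx) as [n Hn]. exists n; unfold An; rewrite Hn; auto.
    - intros [n Hn]; eexists; exact Hn. }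
  set (Pl := fun w k => An k w /\ forall j, An j w -> (k <= j)%nat).
  set (m := fun w => match excluded_middle_informative (exists k, An k w) with
                     | left H => proj1_sig (constructive_indefinite_description _
                                   (least_ex (fun k => An k w) H))
                     | right _ => O end).
  assert (Hm1 : forall w, (exists k, An k w) -> Pl w (m w)).
  { intros w H. unfold m. destruct (excluded_middle_informative _) as [H'|H'].
    - apply (proj2_sig (constructive_indefinite_description _ _)).
    - contradiction. }
  assert (Hm2 : forall w, ~ (exists k, An k w) -> m w = O).
  { intros w H. unfold m. destruct (excluded_middle_informative _); [contradiction|auto]. }
  assert (HPl : forall w k k', Pl w k -> Pl w k' -> k = k').
  { intros w k k' [H1 H2] [H3 H4]. specialize (H2 _ H3). specialize (H4 _ H1). lia. }
  assert (HC : forall k, A (fun w => m w = k)).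
  { intro k.
    assert (HPlk : A (fun w => Pl w k)).
    { apply (A_ext A (fun w => An k w /\ ~ exists j, (j < k)%nat /\ An j w)).
      - apply A_inter; auto. apply A_compl; auto. apply A_cunion; auto.
        intro j. destruct (Nat.lt_ge_cases j k).
        + apply (A_ext A (An j)); auto. intro; split; [tauto|intuition].
        + apply (A_ext A (fun _ => False)); [apply A_empty; auto|]. intro; split; [tauto|lia].
      - intro w; unfold Pl; split.
        + intros [H1 H2]; split; auto. intros j Hj. destruct (Nat.lt_ge_cases j k); auto.
          exfalso; eauto.
        + intros [H1 H2]; split; auto. intros [j [Hj Aj]]. specialize (H2 _ Aj); lia. }
    apply (A_ext A (fun w => Pl w k \/ (~ (exists j, An j w) /\ k = O))).
    - apply A_union; auto. destruct k.
      + apply (A_ext A (fun w => ~ exists j, An j w)). apply A_compl; auto. apply A_cunion; auto.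
        intro; tauto.
      + apply (A_ext A (fun _ => False)); [apply A_empty; auto|]. intro; split; [tauto|intros [_ H]; discriminate].
    - intro w; split.
      + intros [H|[H1 H2]].
        * apply HPl with w; auto. apply Hm1. destruct H; eauto.
        * rewrite Hm2; auto.
      + intro H. destruct (classic (exists j, An j w)) as [Hj|Hj].
        * left. rewrite <- H. auto.
        * right. rewrite Hm2 in H; auto. }
  set (y := fun n : nat => (fun w => match excluded_middle_informative (An n w) with
                      | left _ => f n w | right _ => f (m w) w end) : section X).
  assert (HyL : forall n, L (y n)).
  { intro n. apply HLb. intros x Lx B HB.
    assert (Hh : forall k, A (fun w => B (d w (x w) (f k w)))).
    { intro k. apply (HLa x (f k)); auto. }
    apply (A_ext A (fun w => (An n w /\ B (d w (x w) (f n w))) \/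
                    (~ An n w /\ exists k, m w = k /\ B (d w (x w) (f k w))))).
    - apply A_union; auto. apply A_inter; auto. apply A_inter; auto. apply A_compl; auto.
      apply A_cunion; auto. intro k; apply A_inter; auto.
    - intro w. unfold y. destruct (excluded_middle_informative (An n w)) as [H|H].
      + split; [intros [[_ H1]|[H1 _]]; tauto|]. intro; left; auto.
      + split.
        * intros [[H1 _]|[_ [k [Hk Hb]]]]; [tauto|]. subst k; auto.
        * intro Hb; right; split; eauto. }
  simpl. split.
  - apply (A_ext A (fun w => exists n, An n w)); [apply A_cunion; auto|].
    intro w; rewrite HOm; tauto.
  - exists (fun s => exists n, y n = s). split; [|split].
    + exists (fun n => Some (y n)). intro s; split.
      * intros [n Hn]; exists n; subst; auto.
      * intros [n Hn]; exists n; congruence.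
    + intros s [n Hn]; subst; auto.
    + intros w Hw. rewrite HOm in Hw. split.
      * intros s [n Hn]; subst s. unfold y. destruct (excluded_middle_informative (An n w)); auto.
        destruct (Hm1 w Hw) as [H _]; exact H.
      * intros p Hp eps Heps. destruct (Hkey w p Hp eps Heps) as [x [Dx [Ux Hd]]].
        destruct (HDf x Dx) as [n Hn]. exists (y n); split; [eauto|].
        unfold y. destruct (excluded_middle_informative (An n w)) as [H|H].
        -- rewrite Hn; auto.
        -- exfalso; apply H; unfold An; rewrite Hn; auto.
Qed.
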